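(* Let $1<\alpha<2$, $h>0$, and $(u_k)_{k\in\mathbb{Z}}$ real numbers with $\sum_{k\in\mathbb{Z}}|u_k|(1+|k|)^{1-\alpha}<\infty$. Set $\beta=2-\alpha$ and, for $j\in\mathbb{Z}$, $$I^L_j=h^{\beta}\sum_{m=0}^\infty u_{j-m}v_m^{(\beta)},\qquad I^R_j=h^{\beta}\sum_{m=0}^\infty u_{j+m}v_m^{(\beta)},$$ with $v_m^{(\beta)}$ as defined in the context. Then for every $i\in\mathbb{Z}$, $$-\left[c_L\,\frac{I^L_{i-1}-2I^L_i+I^L_{i+1}}{h^2}+c_R\,\frac{I^R_{i-1}-2I^R_i+I^R_{i+1}}{h^2}\right]=\frac{1}{h^{\alpha}}\sum_{k=-\infty}^{\infty}u_{i+k}\,w_k^{(\alpha)},$$ with $w_k^{(\alpha)}$ as defined in the context, all series converging absolutely.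
   Context: For $\beta>0$: $v_0^{(\beta)}=1/\Gamma(2+\beta)$ and $v_m^{(\beta)}=\big((m+1)^{1+\beta}-2m^{1+\beta}+(m-1)^{1+\beta}\big)/\Gamma(2+\beta)$ for $m\ge1$. For $1<\alpha<2$ and real $\theta$ with $|\theta|\le 2-\alpha$, set $c_L=\sin\frac{(\alpha-\theta)\pi}{2}/\sin(\alpha\pi)$ and $c_R=\sin\frac{(\alpha+\theta)\pi}{2}/\sin(\alpha\pi)$. For integer $n\ge 2$ put $\Delta_n^{(\alpha)}=(n+2)^{3-\alpha}-4(n+1)^{3-\alpha}+6n^{3-\alpha}-4(n-1)^{3-\alpha}+(n-2)^{3-\alpha}$ (with $0^{3-\alpha}=0$). Define $w_k^{(\alpha)}=\frac{-1}{\Gamma(4-\alpha)}\times$: $\Delta^{(\alpha)}_{|k|}\,c_L$ for $k\le -2$; $(3^{3-\alpha}-2^{5-\alpha}+6)c_L+c_R$ for $k=-1$; $(2^{3-\alpha}-4)(c_L+c_R)$ for $k=0$; $(3^{3-\alpha}-2^{5-\alpha}+6)c_R+c_L$ for $k=1$; $\Delta^{(\alpha)}_{k}\,c_R$ for $k\ge 2$. The left side is the central second difference of the discretized Weyl integrals of order $2-\alpha$, approximating the Riesz–Feller derivative $-[c_L\frac{d^2}{dx^2}{}_{-\infty}I_x^{2-\alpha}u+c_R\frac{d^2}{dx^2}{}_xI_{\infty}^{2-\alpha}u]$. *)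

(* Defs.v *)
From Stdlib Require Import Reals ZArith.
From Coquelicot Require Import Coquelicot.
Open Scope R_scope.

Definition Gamma (x : R) : R :=
  RInt_gen (fun t => Rpower t (x - 1) * exp (- t)) (at_right 0) (Rbar_locally p_infty).

(* real power on [0,oo) with the convention 0^y = 0 (y > 0 in all uses) *)
Definition rpow (x y : R) : R := if Req_EM_T x 0 then 0 else Rpower x y.

Definition vcoef (beta : R) (m : nat) : R :=
  match m with
  | O => 1 / Gamma (2 + beta)
  | S _ => (rpow (INR m + 1) (1 + beta) - 2 * rpow (INR m) (1 + beta)
            + rpow (INR m - 1) (1 + beta)) / Gamma (2 + beta)
  end.

Definition cL (alpha theta : R) : R := sin ((alpha - theta) * PI / 2) / sin (alpha * PI).
Definition cR (alpha theta : R) : R := sin ((alpha + theta) * PI / 2) / sin (alpha * PI).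

Definition Delta (alpha : R) (n : Z) : R :=
  let p := 3 - alpha in
  let x := IZR n in
  rpow (x + 2) p - 4 * rpow (x + 1) p + 6 * rpow x p - 4 * rpow (x - 1) p + rpow (x - 2) p.

Definition wcoef (alpha theta : R) (k : Z) : R :=
  let p := 3 - alpha in
  let c := (- 1) / Gamma (4 - alpha) in
  if (k <=? -2)%Z then c * (Delta alpha (Z.abs k) * cL alpha theta)
  else if (k =? -1)%Z then
    c * ((rpow 3 p - rpow 2 (5 - alpha) + 6) * cL alpha theta + cR alpha theta)
  else if (k =? 0)%Z then c * ((rpow 2 p - 4) * (cL alpha theta + cR alpha theta))
  else if (k =? 1)%Z then
    c * ((rpow 3 p - rpow 2 (5 - alpha) + 6) * cR alpha theta + cL alpha theta)
  else c * (Delta alpha k * cR alpha theta).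

Definition zabs_summable (f : Z -> R) : Prop :=
  ex_series (fun n : nat => Rabs (f (Z.of_nat n))) /\
  ex_series (fun n : nat => Rabs (f (- Z.of_nat n - 1)%Z)).

Definition zsum (f : Z -> R) : R :=
  Series (fun n : nat => f (Z.of_nat n)) + Series (fun n : nat => f (- Z.of_nat n - 1)%Z).

Definition IweylL (h beta : R) (u : Z -> R) (j : Z) : R :=
  Rpower h beta * Series (fun m : nat => u (j - Z.of_nat m)%Z * vcoef beta m).
Definition IweylR (h beta : R) (u : Z -> R) (j : Z) : R :=
  Rpower h beta * Series (fun m : nat => u (j + Z.of_nat m)%Z * vcoef beta m).

(* Main.v *)
Require Import Defs.
From Stdlib Require Import Reals ZArith Lia Lra.
From Coquelicot Require Import Coquelicot.
Open Scope R_scope.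


Lemma rpow_pos x y : 0 < x -> rpow x y = Rpower x y.
Proof. intro H. unfold rpow. destruct (Req_EM_T x 0); [lra|reflexivity]. Qed.

Lemma rpow_0 y : rpow 0 y = 0.
Proof. unfold rpow. destruct (Req_EM_T 0 0); [reflexivity|lra]. Qed.

Lemma Rpower_1base y : Rpower 1 y = 1.
Proof. unfold Rpower. rewrite ln_1, Rmult_0_r. apply exp_0. Qed.

Lemma Rpower_pos x y : 0 < Rpower x y.
Proof. apply exp_pos. Qed.

Lemma exp_le_mono a b : a <= b -> exp a <= exp b.
Proof. intro H. destruct (Rle_lt_or_eq_dec _ _ H) as [H'|H'].
  left; apply exp_increasing; auto. rewrite H'; lra. Qed.

Lemma Rpower_decr b d y : 0 < b -> b <= d -> y <= 0 -> Rpower d y <= Rpower b y.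
Proof. intros Hb Hbd Hy. unfold Rpower. apply exp_le_mono.
  assert (ln b <= ln d) by (apply ln_le; lra).
  apply Rmult_le_compat_neg_l; auto. Qed.

Lemma Rpower_scale a b c y : 0 < a -> 0 < b -> 0 < c -> b <= a * c -> y <= 0 ->
  Rpower a y <= Rpower c (- y) * Rpower b y.
Proof. intros Ha Hb Hc Hbac Hy.
  assert (H1 : Rpower (a * c) y <= Rpower b y) by (apply Rpower_decr; auto).
  rewrite <- Rpower_mult_distr in H1 by auto.
  rewrite Rpower_Ropp.
  assert (Hp := Rpower_pos c y).
  apply Rmult_le_reg_l with (Rpower c y); auto.
  rewrite <- Rmult_assoc, Rinv_r by lra. nra. Qed.

Lemma second_diff_bound p : 1 < p < 2 -> forall x, 2 <= x ->
  Rabs (Rpower (x + 1) p - 2 * Rpower x p + Rpower (x - 1) p)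
   <= 2 * p * (p - 1) * Rpower 3 (2 - p) * Rpower (x + 1) (p - 2).
Proof. intros Hp x Hx.
  destruct (MVT_cor2 (fun t => Rpower t p) (fun t => p * Rpower t (p - 1)) x (x+1))
   as [xi [Exi Hxi]]; [lra| intros c Hc; apply derivable_pt_lim_power; lra |].
  destruct (MVT_cor2 (fun t => Rpower t p) (fun t => p * Rpower t (p - 1)) (x-1) x)
   as [eta [Eeta Heta]]; [lra| intros c Hc; apply derivable_pt_lim_power; lra |].
  destruct (MVT_cor2 (fun t => Rpower t (p-1)) (fun t => (p-1) * Rpower t (p - 1 - 1)) eta xi)
   as [z [Ez Hz]]; [lra| intros c Hc; apply derivable_pt_lim_power; lra |].
  simpl in *.
  replace (Rpower (x + 1) p - 2 * Rpower x p + Rpower (x - 1) p) with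
    (p * (p - 1) * Rpower z (p - 1 - 1) * (xi - eta)) by nra.
  assert (Hz2 : Rpower z (p - 1 - 1) <= Rpower 3 (- (p - 2)) * Rpower (x + 1) (p - 2)).
  { replace (p - 1 - 1) with (p - 2) by ring. apply Rpower_scale; lra. }
  replace (- (p - 2)) with (2 - p) in Hz2 by ring.
  assert (Hzp := Rpower_pos z (p - 1 - 1)).
  rewrite Rabs_right.
  2: { apply Rle_ge. apply Rmult_le_pos; [|lra]. apply Rmult_le_pos; nra. }
  assert (p * (p - 1) * Rpower z (p - 1 - 1) * (xi - eta) <= p * (p - 1) * Rpower z (p - 1 - 1) * 2).
  { apply Rmult_le_compat_l; [|lra]. apply Rmult_le_pos; nra. }
  assert (0 <= p * (p-1)) by nra.
  assert (p * (p - 1) * Rpower z (p - 1 - 1) * 2 <= p * (p - 1) * (Rpower 3 (2 - p) * Rpower (x + 1) (p - 2)) * 2).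
  { apply Rmult_le_compat_r; [lra|]. apply Rmult_le_compat_l; auto. }
  nra.
Qed.

Lemma vcoef_bound alpha : 1 < alpha < 2 -> exists K, 0 <= K /\
  forall m, Rabs (vcoef (2 - alpha) m) <= K * Rpower (INR m + 1) (1 - alpha).
Proof. intros Ha.
  set (p := 1 + (2 - alpha)).
  set (K0 := 2 * p * (p - 1) * Rpower 3 (2 - p)).
  assert (HK0 : 0 <= K0). { unfold K0. assert (H3 := Rpower_pos 3 (2 - p)). unfold p in *. 
     apply Rmult_le_pos; [|lra]. nra. }
  set (g := Gamma (2 + (2 - alpha))).
  exists (Rabs (/ g) * (4 + K0)). split.
  { apply Rmult_le_pos; [apply Rabs_pos| lra]. }
  intro m. unfold vcoef. fold g. fold p. unfold Rdiv.
  destruct m as [|m].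
  - simpl. replace (0 + 1) with 1 by ring. rewrite Rpower_1base. rewrite Rmult_1_l.
    assert (0 <= Rabs (/ g)) by apply Rabs_pos. nra.
  - rewrite Rabs_mult, Rmult_comm, Rmult_assoc. apply Rmult_le_compat_l; [apply Rabs_pos|].
    destruct m as [|m].
    + replace (INR 1 + 1) with 2 by (simpl; ring). replace (INR 1) with 1 by (simpl; ring).
      replace (1 - 1) with 0 by ring. rewrite rpow_0, !rpow_pos by lra. rewrite Rpower_1base.
      assert (H2 : Rpower 2 p = 4 * Rpower 2 (1 - alpha)).
      { replace p with (2 + (1 - alpha)) by (unfold p; ring). rewrite Rpower_plus.
        replace 2 with (INR 2) at 2 by (simpl; ring). rewrite Rpower_pow by lra. ring. }
      assert (H1 : 1 <= Rpower 2 p).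
      { unfold Rpower. assert (0 < ln 2) by (rewrite <- ln_1; apply ln_increasing; lra).
        assert (He := exp_ineq1_le (p * ln 2)). unfold p in *. nra. }
      assert (Hq := Rpower_pos 2 (1 - alpha)).
      apply Rabs_le; split; nra.
    + set (x := INR (S (S m))).
      assert (Hx : 2 <= x). { unfold x. rewrite !S_INR. assert (H := pos_INR m). lra. }
      rewrite !rpow_pos by lra.
      assert (H := second_diff_bound p ltac:(unfold p; lra) x Hx).
      fold K0 in H. replace (p - 2) with (1 - alpha) in H by (unfold p; ring).
      assert (Hq := Rpower_pos (x + 1) (1 - alpha)). nra.
Qed.

Lemma zs_ext f g : (forall k, f k = g k) -> zabs_summable f -> zabs_summable g.
Proof. intros E [H1 H2]. split.
 - eapply ex_series_ext; [|exact H1]. intro n; simpl; now rewrite E.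
 - eapply ex_series_ext; [|exact H2]. intro n; simpl; now rewrite E. Qed.

Lemma zs_up c : zabs_summable c -> zabs_summable (fun k => c (k + 1)%Z).
Proof. intros [H1 H2]. split.
  - apply (proj1 (ex_series_incr_1 _)) in H1. eapply ex_series_ext; [|exact H1].
    intro n. cbv beta. rewrite ?Nat2Z.inj_succ. do 2 apply f_equal; lia.
  - apply (proj2 (ex_series_incr_1 _)). eapply ex_series_ext; [|exact H2].
    intro n. cbv beta. rewrite ?Nat2Z.inj_succ. do 2 apply f_equal; lia.
Qed.

Lemma zs_down c : zabs_summable c -> zabs_summable (fun k => c (k - 1)%Z).
Proof. intros [H1 H2]. split.
  - apply (proj2 (ex_series_incr_1 _)). eapply ex_series_ext; [|exact H1].
    intro n. cbv beta. rewrite ?Nat2Z.inj_succ. do 2 apply f_equal; lia.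
  - apply (proj1 (ex_series_incr_1 _)) in H2. eapply ex_series_ext; [|exact H2].
    intro n. cbv beta. rewrite ?Nat2Z.inj_succ. do 2 apply f_equal; lia.
Qed.

Lemma zs_refl c : zabs_summable c -> zabs_summable (fun k => c (- k)%Z).
Proof. intros [H1 H2]. split.
  - apply (proj2 (ex_series_incr_1 _)). eapply ex_series_ext; [|exact H2].
    intro n. cbv beta. rewrite ?Nat2Z.inj_succ. do 2 apply f_equal; lia.
  - apply (proj1 (ex_series_incr_1 _)) in H1. eapply ex_series_ext; [|exact H1].
    intro n. cbv beta. rewrite ?Nat2Z.inj_succ. do 2 apply f_equal; lia.
Qed.

Lemma zs_shift c j : zabs_summable c -> zabs_summable (fun k => c (j + k)%Z).
Proof. intro H.
  assert (Hp : forall n : nat, zabs_summable (fun k => c (Z.of_nat n + k)%Z)).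
  { induction n. - eapply zs_ext; [|exact H]. intro k. apply f_equal; lia.
    - eapply zs_ext; [|exact (zs_up _ IHn)]. intro k. cbv beta. rewrite ?Nat2Z.inj_succ. apply f_equal; lia. }
  assert (Hm : forall n : nat, zabs_summable (fun k => c (- Z.of_nat n + k)%Z)).
  { induction n. - eapply zs_ext; [|exact H]. intro k. apply f_equal; lia.
    - eapply zs_ext; [|exact (zs_down _ IHn)]. intro k. cbv beta. rewrite ?Nat2Z.inj_succ. apply f_equal; lia. }
  destruct (Z_le_gt_dec 0 j).
  - assert (E : forall k, (Z.of_nat (Z.to_nat j) + k = j + k)%Z) by lia.
    apply (zs_ext _ _ (fun k => f_equal c (E k)) (Hp _)).
  - assert (E : forall k, (- Z.of_nat (Z.to_nat (-j)) + k = j + k)%Z) by lia.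
    apply (zs_ext _ _ (fun k => f_equal c (E k)) (Hm _)).
Qed.

Lemma ex_Lc c j : zabs_summable c -> ex_series (fun m => Rabs (c (j - Z.of_nat m)%Z)).
Proof. intro H. destruct (zs_shift _ (-j) (zs_refl _ H)) as [H1 _].
  eapply ex_series_ext; [|exact H1]. intro n. cbv beta. rewrite ?Nat2Z.inj_succ. do 2 apply f_equal; lia. Qed.

Lemma ex_Rc c j : zabs_summable c -> ex_series (fun m => Rabs (c (j + Z.of_nat m)%Z)).
Proof. intro H. destruct (zs_shift _ j H) as [H1 _]. exact H1. Qed.

Lemma abs_ineq J M : 0 <= M -> 1 + Rabs (J - M) <= (M + 1) * (1 + Rabs J) /\
   1 + Rabs (J + M) <= (M + 1) * (1 + Rabs J).
Proof. intro HM. unfold Rabs. repeat destruct Rcase_abs; split; nra. Qed.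

Lemma weight_bound alpha j m : 1 < alpha < 2 ->
  Rpower (INR m + 1) (1 - alpha) <=
    Rpower (1 + Rabs (IZR j)) (alpha - 1) * Rpower (1 + IZR (Z.abs (j - Z.of_nat m))) (1 - alpha) /\
  Rpower (INR m + 1) (1 - alpha) <=
    Rpower (1 + Rabs (IZR j)) (alpha - 1) * Rpower (1 + IZR (Z.abs (j + Z.of_nat m))) (1 - alpha).
Proof. intro Ha. assert (HM := pos_INR m).
  destruct (abs_ineq (IZR j) (INR m) HM) as [E1 E2].
  rewrite !abs_IZR, ?minus_IZR, ?plus_IZR, <- !INR_IZR_INZ.
  replace (alpha - 1) with (- (1 - alpha)) by ring.
  assert (0 <= Rabs (IZR j)) by apply Rabs_pos.
  assert (0 <= Rabs (IZR j - INR m)) by apply Rabs_pos.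
  assert (0 <= Rabs (IZR j + INR m)) by apply Rabs_pos.
  split; apply Rpower_scale; lra.
Qed.

Lemma norm_R (x : R) : norm x = Rabs x.
Proof. reflexivity. Qed.

Lemma ex_scal_R c (a : nat -> R) : ex_series a -> ex_series (fun n => c * a n).
Proof. intro H. apply (ex_series_scal_l c a H). Qed.

Lemma ex_LR alpha u j : 1 < alpha < 2 ->
  zabs_summable (fun k => u k * Rpower (1 + IZR (Z.abs k)) (1 - alpha)) ->
  ex_series (fun m => Rabs (u (j - Z.of_nat m)%Z * vcoef (2 - alpha) m)) /\
  ex_series (fun m => Rabs (u (j + Z.of_nat m)%Z * vcoef (2 - alpha) m)).
Proof. intros Ha Hs.
  destruct (vcoef_bound alpha Ha) as [K [HK Hv]].
  set (C := Rpower (1 + Rabs (IZR j)) (alpha - 1)).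
  assert (HC : 0 < C) by apply Rpower_pos.
  split.
  - apply (@ex_series_le R_AbsRing R_CompleteNormedModule) with
      (b := fun m => K * C * Rabs (u (j - Z.of_nat m)%Z * Rpower (1 + IZR (Z.abs (j - Z.of_nat m))) (1 - alpha))).
    + intro n. rewrite norm_R, Rabs_Rabsolu, !Rabs_mult.
      rewrite (Rabs_right (Rpower _ _)) by (left; apply Rpower_pos).
      destruct (weight_bound alpha j n Ha) as [W _]. fold C in W.
      specialize (Hv n). assert (0 <= Rabs (u (j - Z.of_nat n)%Z)) by apply Rabs_pos.
      assert (Rabs (vcoef (2 - alpha) n) <= K * (C * Rpower (1 + IZR (Z.abs (j - Z.of_nat n))) (1 - alpha))).
      { eapply Rle_trans; [exact Hv|]. apply Rmult_le_compat_l; auto. }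
      nra.
    + apply ex_scal_R. exact (ex_Lc _ j Hs).
  - apply (@ex_series_le R_AbsRing R_CompleteNormedModule) with
      (b := fun m => K * C * Rabs (u (j + Z.of_nat m)%Z * Rpower (1 + IZR (Z.abs (j + Z.of_nat m))) (1 - alpha))).
    + intro n. rewrite norm_R, Rabs_Rabsolu, !Rabs_mult.
      rewrite (Rabs_right (Rpower _ _)) by (left; apply Rpower_pos).
      destruct (weight_bound alpha j n Ha) as [_ W]. fold C in W.
      specialize (Hv n). assert (0 <= Rabs (u (j + Z.of_nat n)%Z)) by apply Rabs_pos.
      assert (Rabs (vcoef (2 - alpha) n) <= K * (C * Rpower (1 + IZR (Z.abs (j + Z.of_nat n))) (1 - alpha))).
      { eapply Rle_trans; [exact Hv|]. apply Rmult_le_compat_l; auto. }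
      nra.
    + apply ex_scal_R. exact (ex_Rc _ j Hs).
Qed.

Definition D2 (v : nat -> R) (n : nat) : R := v (S (S n)) - 2 * v (S n) + v n.
Definition dL (v : nat -> R) (k : Z) : R :=
  if (k <=? -1)%Z then D2 v (Z.to_nat (- k - 1))
  else if (k =? 0)%Z then v 1%nat - 2 * v 0%nat
  else if (k =? 1)%Z then v 0%nat else 0.

Lemma dL_neg v k : (k <= -1)%Z -> dL v k = D2 v (Z.to_nat (- k - 1)).
Proof. intro H. unfold dL. destruct (Z.leb_spec k (-1)); [reflexivity|lia]. Qed.
Lemma dL_0 v : dL v 0 = v 1%nat - 2 * v 0%nat.
Proof. reflexivity. Qed.
Lemma dL_1 v : dL v 1 = v 0%nat.
Proof. reflexivity. Qed.
Lemma dL_ge2 v k : (2 <= k)%Z -> dL v k = 0.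
Proof. intro H. unfold dL. destruct (Z.leb_spec k (-1)); [lia|].
  destruct (Z.eqb_spec k 0); [lia|]. destruct (Z.eqb_spec k 1); [lia|]. reflexivity. Qed.

Lemma G_eq alpha : Gamma (2 + (2 - alpha)) = Gamma (4 - alpha).
Proof. f_equal. ring. Qed.

Lemma v0 alpha : vcoef (2 - alpha) 0 = / Gamma (4 - alpha).
Proof. unfold vcoef. rewrite G_eq. unfold Rdiv. ring. Qed.

Lemma vS alpha m : vcoef (2 - alpha) (S m) =
  (rpow (INR (S m) + 1) (3 - alpha) - 2 * rpow (INR (S m)) (3 - alpha)
   + rpow (INR (S m) - 1) (3 - alpha)) * / Gamma (4 - alpha).
Proof. unfold vcoef. rewrite G_eq. replace (1 + (2 - alpha)) with (3 - alpha) by ring.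
  reflexivity. Qed.

Lemma D2_gen (F : R -> R) x :
  (F (x+1+1+1+1) - 2 * F (x+1+1+1) + F (x+1+1+1-1))
  - 2 * (F (x+1+1+1) - 2 * F (x+1+1) + F (x+1+1-1))
  + (F (x+1+1) - 2 * F (x+1) + F (x+1-1))
  = F (x+1+1+2) - 4 * F (x+1+1+1) + 6 * F (x+1+1) - 4 * F (x+1+1-1) + F (x+1+1-2).
Proof.
  replace (x+1+1+1-1) with (x+1+1) by ring. replace (x+1+1-1) with (x+1) by ring.
  replace (x+1-1) with x by ring. replace (x+1+1+2) with (x+1+1+1+1) by ring.
  replace (x+1+1-2) with x by ring. ring. Qed.

Lemma D2_S alpha m : D2 (vcoef (2 - alpha)) (S m) =
  Defs.Delta alpha (Z.of_nat (S (S m))) * / Gamma (4 - alpha).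
Proof. unfold D2. rewrite !vS. unfold Defs.Delta. rewrite <- INR_IZR_INZ. rewrite !S_INR.
  rewrite <- (D2_gen (fun t => rpow t (3 - alpha))). ring. Qed.

Lemma D2_0 alpha : D2 (vcoef (2 - alpha)) 0 =
  (rpow 3 (3 - alpha) - rpow 2 (5 - alpha) + 6) * / Gamma (4 - alpha).
Proof. unfold D2. rewrite !vS, v0.
  replace (INR 2 + 1) with 3 by (simpl; ring). replace (INR 2) with 2 by (simpl; ring).
  replace (2 - 1) with 1 by ring. replace (INR 1 + 1) with 2 by (simpl; ring).
  replace (INR 1) with 1 by (simpl; ring). replace (1 - 1) with 0 by ring.
  rewrite rpow_0. rewrite !(rpow_pos 1) by lra. rewrite Rpower_1base.
  rewrite !(rpow_pos 2) by lra.
  replace (5 - alpha) with (2 + (3 - alpha)) by ring. rewrite Rpower_plus.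
  assert (H4 : Rpower 2 2 = 4).
  { replace 2 with (1 + 1) at 2 by ring. rewrite Rpower_plus, Rpower_1 by lra. ring. }
  rewrite H4. ring. Qed.

Lemma wcoef_eq alpha theta k : wcoef alpha theta k =
  - (cL alpha theta * dL (vcoef (2 - alpha)) k + cR alpha theta * dL (vcoef (2 - alpha)) (- k)).
Proof.
  destruct (Z_le_gt_dec k (-2)) as [H1|H1].
  { unfold wcoef. destruct (Z.leb_spec k (-2)); [|lia].
    rewrite dL_neg by lia. rewrite (dL_ge2 _ (-k)) by lia.
    replace (Z.to_nat (- k - 1)) with (S (Z.to_nat (- k - 2))) by lia. rewrite D2_S.
    replace (Z.of_nat (S (S (Z.to_nat (- k - 2))))) with (Z.abs k) by lia. unfold Rdiv. ring. }
  destruct (Z_le_gt_dec 2 k) as [H2|H2].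
  { unfold wcoef. destruct (Z.leb_spec k (-2)); [lia|].
    destruct (Z.eqb_spec k (-1)); [lia|]. destruct (Z.eqb_spec k 0); [lia|].
    destruct (Z.eqb_spec k 1); [lia|].
    rewrite (dL_neg _ (-k)) by lia. rewrite (dL_ge2 _ k) by lia.
    replace (Z.to_nat (- - k - 1)) with (S (Z.to_nat (k - 2))) by lia. rewrite D2_S.
    replace (Z.of_nat (S (S (Z.to_nat (k - 2))))) with k by lia. unfold Rdiv. ring. }
  assert (Hk : (k = -1 \/ k = 0 \/ k = 1)%Z) by lia. destruct Hk as [ Hk | [ Hk | Hk ] ]; subst k.
  - replace (wcoef alpha theta (-1)) with
      ((-1) / Gamma (4 - alpha) * ((rpow 3 (3 - alpha) - rpow 2 (5 - alpha) + 6) * cL alpha theta + cR alpha theta))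
      by reflexivity.
    replace (dL (vcoef (2 - alpha)) (-1)) with (D2 (vcoef (2 - alpha)) 0) by reflexivity.
    replace (dL (vcoef (2 - alpha)) (- -1)) with (vcoef (2 - alpha) 0) by reflexivity.
    rewrite D2_0, v0. unfold Rdiv. ring.
  - replace (wcoef alpha theta 0) with
      ((-1) / Gamma (4 - alpha) * ((rpow 2 (3 - alpha) - 4) * (cL alpha theta + cR alpha theta)))
      by reflexivity.
    replace (dL (vcoef (2 - alpha)) (- 0)) with (dL (vcoef (2 - alpha)) 0) by reflexivity.
    rewrite dL_0, vS, v0.
    replace (INR 1 + 1) with 2 by (simpl; ring). replace (INR 1) with 1 by (simpl; ring).
    replace (1 - 1) with 0 by ring. rewrite rpow_0, (rpow_pos 1), Rpower_1base by lra.
    unfold Rdiv. ring.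
  - replace (wcoef alpha theta 1) with
      ((-1) / Gamma (4 - alpha) * ((rpow 3 (3 - alpha) - rpow 2 (5 - alpha) + 6) * cR alpha theta + cL alpha theta))
      by reflexivity.
    replace (dL (vcoef (2 - alpha)) (Z.opp 1)) with (D2 (vcoef (2 - alpha)) 0) by reflexivity.
    rewrite dL_1, D2_0, v0. unfold Rdiv. ring.
Qed.

Lemma exR_le (a b : nat -> R) : (forall n, Rabs (a n) <= b n) -> ex_series b -> ex_series a.
Proof. intros H Hb. apply (@ex_series_le R_AbsRing R_CompleteNormedModule) with b; auto. Qed.

Lemma exR_plus (a b : nat -> R) : ex_series a -> ex_series b -> ex_series (fun n => a n + b n).
Proof. intros Ha Hb. apply (ex_series_plus a b Ha Hb). Qed.

Lemma exR_scal c (a : nat -> R) : ex_series a -> ex_series (fun n => c * a n).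
Proof. intro H. apply (ex_series_scal_l c a H). Qed.

Lemma exabs3 (a b c : nat -> R) : ex_series (fun n => Rabs (a n)) -> ex_series (fun n => Rabs (b n)) ->
  ex_series (fun n => Rabs (c n)) -> ex_series (fun n => Rabs (a n - 2 * b n + c n)).
Proof. intros Ha Hb Hc. apply exR_le with (fun n => Rabs (a n) + 2 * Rabs (b n) + Rabs (c n)).
  - intro n. rewrite Rabs_Rabsolu.
    assert (Rabs (a n - 2 * b n + c n) <= Rabs (a n - 2 * b n) + Rabs (c n)) by apply Rabs_triang.
    assert (Rabs (a n - 2 * b n) <= Rabs (a n) + Rabs (- (2 * b n))) by apply Rabs_triang.
    rewrite Rabs_Ropp, Rabs_mult, (Rabs_right 2) in H0 by lra. lra.
  - apply exR_plus; [apply exR_plus|]; auto. apply exR_scal; auto.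
Qed.

Lemma exabs2 x y (a b : nat -> R) : ex_series (fun n => Rabs (a n)) -> ex_series (fun n => Rabs (b n)) ->
  ex_series (fun n => Rabs (- (x * a n + y * b n))).
Proof. intros Ha Hb. apply exR_le with (fun n => Rabs x * Rabs (a n) + Rabs y * Rabs (b n)).
  - intro n. rewrite Rabs_Rabsolu, Rabs_Ropp, <- !Rabs_mult. apply Rabs_triang.
  - apply exR_plus; apply exR_scal; auto.
Qed.

Lemma Series_zero : Series (fun _ : nat => 0) = 0.
Proof. rewrite (Series_ext _ (fun n : nat => 0 * 1)) by (intro; ring). rewrite Series_scal_l. ring. Qed.

Lemma ex_zero : ex_series (fun _ : nat => 0).
Proof. assert (H := ex_series_geom (1/2) ltac:(rewrite Rabs_right; lra)).
  apply (exR_scal 0) in H. eapply ex_series_ext; [|exact H]. intro; simpl; ring. Qed.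

Lemma fin2 (f : nat -> R) : (forall n, (2 <= n)%nat -> f n = 0) ->
  ex_series (fun n => Rabs (f n)) /\ Series f = f 0%nat + f 1%nat.
Proof. intro H.
  assert (E : ex_series (fun n => Rabs (f n))).
  { apply (proj2 (ex_series_incr_n _ 2)). eapply ex_series_ext; [|exact ex_zero].
    intro n. rewrite H by lia. rewrite Rabs_R0. reflexivity. }
  split; auto. rewrite (Series_incr_n f 2) by (auto; apply ex_series_Rabs; auto).
  rewrite (Series_ext _ (fun _ => 0)) by (intro n; apply H; lia).
  rewrite Series_zero. simpl. ring. Qed.

Lemma exR_minus (a b : nat -> R) : ex_series a -> ex_series b -> ex_series (fun n => a n - b n).
Proof. intros Ha Hb. apply (ex_series_minus a b Ha Hb). Qed.

Lemma Series_comb3 (a b c : nat -> R) : ex_series a -> ex_series b -> ex_series c ->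
  Series (fun n => a n - 2 * b n + c n) = Series a - 2 * Series b + Series c.
Proof. intros Ha Hb Hc.
  rewrite (Series_plus (fun n => a n - 2 * b n) c); auto.
  - rewrite (Series_minus a (fun n => 2 * b n)), Series_scal_l; auto. apply exR_scal; auto.
  - apply exR_minus; auto. apply exR_scal; auto.
Qed.

Lemma Series_comb2 x y (a b : nat -> R) : ex_series a -> ex_series b ->
  Series (fun n => - (x * a n + y * b n)) = - (x * Series a + y * Series b).
Proof. intros Ha Hb. rewrite Series_opp.
  rewrite (Series_plus (fun n => x * a n) (fun n => y * b n)) by (apply exR_scal; auto).
  rewrite !Series_scal_l. reflexivity. Qed.

Theorem mainTheorem3 (alpha theta h : R) (u : Z -> R) :
  1 < alpha < 2 ->
  Rabs theta <= 2 - alpha ->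
  0 < h ->
  zabs_summable (fun k => u k * Rpower (1 + IZR (Z.abs k)) (1 - alpha)) ->
  let beta := 2 - alpha in
  (forall j : Z, ex_series (fun m : nat => Rabs (u (j - Z.of_nat m)%Z * vcoef beta m))) /\
  (forall j : Z, ex_series (fun m : nat => Rabs (u (j + Z.of_nat m)%Z * vcoef beta m))) /\
  (forall i : Z,
     zabs_summable (fun k => u (i + k)%Z * wcoef alpha theta k) /\
     - (cL alpha theta *
          (IweylL h beta u (i - 1) - 2 * IweylL h beta u i + IweylL h beta u (i + 1)) / h ^ 2
        + cR alpha theta *
          (IweylR h beta u (i - 1) - 2 * IweylR h beta u i + IweylR h beta u (i + 1)) / h ^ 2)
     = / Rpower h alpha * zsum (fun k => u (i + k)%Z * wcoef alpha theta k)).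
Proof.
  intros Ha Hth Hh Hs beta. subst beta.
  assert (HLR := fun j => ex_LR alpha u j Ha Hs).
  split; [intro j; exact (proj1 (HLR j))|]. split; [intro j; exact (proj2 (HLR j))|].
  intro i.
  set (v := vcoef (2 - alpha)).
  assert (aT0 : ex_series (fun n => Rabs (u (i - 1 - Z.of_nat n)%Z * v n))) by exact (proj1 (HLR (i - 1)%Z)).
  assert (aT1 : ex_series (fun n => Rabs (u (i - 1 - Z.of_nat n)%Z * v (S n)))).
  { assert (X := proj1 (ex_series_incr_1 _) (proj1 (HLR i))).
    eapply ex_series_ext; [|exact X]. intro n. cbv beta.
    replace (i - Z.of_nat (S n))%Z with (i - 1 - Z.of_nat n)%Z by lia. reflexivity. }
  assert (aT2 : ex_series (fun n => Rabs (u (i - 1 - Z.of_nat n)%Z * v (S (S n))))).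
  { assert (X := proj1 (ex_series_incr_n _ 2) (proj1 (HLR (i + 1)%Z))).
    eapply ex_series_ext; [|exact X]. intro n. cbv beta.
    replace (i + 1 - Z.of_nat (2 + n))%Z with (i - 1 - Z.of_nat n)%Z by lia. reflexivity. }
  assert (aU0 : ex_series (fun n => Rabs (u (i + 1 + Z.of_nat n)%Z * v n))) by exact (proj2 (HLR (i + 1)%Z)).
  assert (aU1 : ex_series (fun n => Rabs (u (i + 1 + Z.of_nat n)%Z * v (S n)))).
  { assert (X := proj1 (ex_series_incr_1 _) (proj2 (HLR i))).
    eapply ex_series_ext; [|exact X]. intro n. cbv beta.
    replace (i + Z.of_nat (S n))%Z with (i + 1 + Z.of_nat n)%Z by lia. reflexivity. }
  assert (aU2 : ex_series (fun n => Rabs (u (i + 1 + Z.of_nat n)%Z * v (S (S n))))).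
  { assert (X := proj1 (ex_series_incr_n _ 2) (proj2 (HLR (i - 1)%Z))).
    eapply ex_series_ext; [|exact X]. intro n. cbv beta.
    replace (i - 1 + Z.of_nat (2 + n))%Z with (i + 1 + Z.of_nat n)%Z by lia. reflexivity. }
  assert (aNL : ex_series (fun n => Rabs (u (i - 1 - Z.of_nat n)%Z * D2 v n))).
  { eapply ex_series_ext; [|exact (exabs3 _ _ _ aT2 aT1 aT0)]. intro n. cbv beta.
    unfold D2. f_equal. ring. }
  assert (aPR : ex_series (fun n => Rabs (u (i + 1 + Z.of_nat n)%Z * D2 v n))).
  { eapply ex_series_ext; [|exact (exabs3 _ _ _ aU2 aU1 aU0)]. intro n. cbv beta.
    unfold D2. f_equal. ring. }
  destruct (fin2 (fun n => u (i + Z.of_nat n)%Z * dL v (Z.of_nat n))) as [aPL sPL].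
  { intros n Hn. rewrite dL_ge2 by lia. ring. }
  destruct (fin2 (fun n => u (i + (- Z.of_nat n - 1))%Z * dL v (- (- Z.of_nat n - 1))%Z)) as [aNR sNR].
  { intros n Hn. rewrite dL_ge2 by lia. ring. }
  assert (aPR' : ex_series (fun n => Rabs (u (i + Z.of_nat n)%Z * dL v (- Z.of_nat n)%Z))).
  { apply (proj2 (ex_series_incr_1 _)). eapply ex_series_ext; [|exact aPR].
    intro n. cbv beta. rewrite dL_neg by lia.
    replace (Z.to_nat (- - Z.of_nat (S n) - 1)) with n by lia.
    replace (i + Z.of_nat (S n))%Z with (i + 1 + Z.of_nat n)%Z by lia. reflexivity. }
  assert (aNL' : ex_series (fun n => Rabs (u (i + (- Z.of_nat n - 1))%Z * dL v (- Z.of_nat n - 1)%Z))).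
  { eapply ex_series_ext; [|exact aNL].
    intro n. cbv beta. rewrite dL_neg by lia.
    replace (Z.to_nat (- (- Z.of_nat n - 1) - 1)) with n by lia.
    replace (i + (- Z.of_nat n - 1))%Z with (i - 1 - Z.of_nat n)%Z by lia. reflexivity. }
  assert (EP : forall n, u (i + Z.of_nat n)%Z * wcoef alpha theta (Z.of_nat n) =
     - (cL alpha theta * (u (i + Z.of_nat n)%Z * dL v (Z.of_nat n)) +
        cR alpha theta * (u (i + Z.of_nat n)%Z * dL v (- Z.of_nat n)%Z))).
  { intro n. rewrite wcoef_eq. fold v. ring. }
  assert (EN : forall n, u (i + (- Z.of_nat n - 1))%Z * wcoef alpha theta (- Z.of_nat n - 1)%Z =
     - (cL alpha theta * (u (i + (- Z.of_nat n - 1))%Z * dL v (- Z.of_nat n - 1)%Z) +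
        cR alpha theta * (u (i + (- Z.of_nat n - 1))%Z * dL v (- (- Z.of_nat n - 1))%Z))).
  { intro n. rewrite wcoef_eq. fold v. ring. }
  split.
  { split.
    - eapply ex_series_ext; [|exact (exabs2 (cL alpha theta) (cR alpha theta) _ _ aPL aPR')].
      intro n. cbv beta. rewrite EP. reflexivity.
    - eapply ex_series_ext; [|exact (exabs2 (cL alpha theta) (cR alpha theta) _ _ aNL' aNR)].
      intro n. cbv beta. rewrite EN. reflexivity. }
  assert (xT0 := ex_series_Rabs _ aT0). assert (xT1 := ex_series_Rabs _ aT1).
  assert (xT2 := ex_series_Rabs _ aT2). assert (xU0 := ex_series_Rabs _ aU0).
  assert (xU1 := ex_series_Rabs _ aU1). assert (xU2 := ex_series_Rabs _ aU2).
  assert (xL0 := ex_series_Rabs _ (proj1 (HLR i))). assert (xLp := ex_series_Rabs _ (proj1 (HLR (i+1)%Z))).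
  assert (xRm := ex_series_Rabs _ (proj2 (HLR (i-1)%Z))). assert (xR0 := ex_series_Rabs _ (proj2 (HLR i))).
  set (T0 := Series (fun n => u (i - 1 - Z.of_nat n)%Z * v n)).
  set (T1 := Series (fun n => u (i - 1 - Z.of_nat n)%Z * v (S n))).
  set (T2 := Series (fun n => u (i - 1 - Z.of_nat n)%Z * v (S (S n)))).
  set (U0 := Series (fun n => u (i + 1 + Z.of_nat n)%Z * v n)).
  set (U1 := Series (fun n => u (i + 1 + Z.of_nat n)%Z * v (S n))).
  set (U2 := Series (fun n => u (i + 1 + Z.of_nat n)%Z * v (S (S n)))).
  assert (eSL0 : Series (fun m => u (i - Z.of_nat m)%Z * v m) = u i * v 0%nat + T1).
  { rewrite Series_incr_1 by exact xL0. f_equal.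
    - replace (i - Z.of_nat 0)%Z with i by lia. reflexivity.
    - apply Series_ext. intro n. replace (i - Z.of_nat (S n))%Z with (i - 1 - Z.of_nat n)%Z by lia. reflexivity. }
  assert (eSLp : Series (fun m => u (i + 1 - Z.of_nat m)%Z * v m) = u (i + 1)%Z * v 0%nat + u i * v 1%nat + T2).
  { rewrite (Series_incr_n _ 2) by (auto; exact xLp). cbn [sum_f_R0 Nat.pred]. f_equal. f_equal.
    - replace (i + 1 - Z.of_nat 0)%Z with (i + 1)%Z by lia. reflexivity.
    - replace (i + 1 - Z.of_nat 1)%Z with i by lia. reflexivity.
    - apply Series_ext. intro n. replace (i + 1 - Z.of_nat (2 + n))%Z with (i - 1 - Z.of_nat n)%Z by lia. reflexivity. }
  assert (eSRm : Series (fun m => u (i - 1 + Z.of_nat m)%Z * v m) = u (i - 1)%Z * v 0%nat + u i * v 1%nat + U2).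
  { rewrite (Series_incr_n _ 2) by (auto; exact xRm). cbn [sum_f_R0 Nat.pred]. f_equal. f_equal.
    - replace (i - 1 + Z.of_nat 0)%Z with (i - 1)%Z by lia. reflexivity.
    - replace (i - 1 + Z.of_nat 1)%Z with i by lia. reflexivity.
    - apply Series_ext. intro n. replace (i - 1 + Z.of_nat (2 + n))%Z with (i + 1 + Z.of_nat n)%Z by lia. reflexivity. }
  assert (eSR0 : Series (fun m => u (i + Z.of_nat m)%Z * v m) = u i * v 0%nat + U1).
  { rewrite Series_incr_1 by exact xR0. f_equal.
    - replace (i + Z.of_nat 0)%Z with i by lia. reflexivity.
    - apply Series_ext. intro n. replace (i + Z.of_nat (S n))%Z with (i + 1 + Z.of_nat n)%Z by lia. reflexivity. }
  assert (eNL : Series (fun n => u (i + (- Z.of_nat n - 1))%Z * dL v (- Z.of_nat n - 1)%Z) = T2 - 2 * T1 + T0).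
  { unfold T0, T1, T2. rewrite <- Series_comb3 by auto. apply Series_ext. intro n. rewrite dL_neg by lia.
    replace (Z.to_nat (- (- Z.of_nat n - 1) - 1)) with n by lia.
    replace (i + (- Z.of_nat n - 1))%Z with (i - 1 - Z.of_nat n)%Z by lia. unfold D2. ring. }
  assert (ePR : Series (fun n => u (i + Z.of_nat n)%Z * dL v (- Z.of_nat n)%Z) =
     u i * (v 1%nat - 2 * v 0%nat) + (U2 - 2 * U1 + U0)).
  { rewrite Series_incr_1 by (apply ex_series_Rabs; exact aPR'). f_equal.
    - replace (i + Z.of_nat 0)%Z with i by lia. reflexivity.
    - unfold U0, U1, U2. rewrite <- Series_comb3 by auto. apply Series_ext. intro n. rewrite dL_neg by lia.
      replace (Z.to_nat (- - Z.of_nat (S n) - 1)) with n by lia.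
      replace (i + Z.of_nat (S n))%Z with (i + 1 + Z.of_nat n)%Z by lia. unfold D2. ring. }
  unfold zsum.
  rewrite (Series_ext _ _ EP), (Series_ext _ _ EN).
  rewrite !Series_comb2 by (apply ex_series_Rabs; assumption).
  rewrite sPL, sNR, eNL, ePR.
  unfold IweylL, IweylR. fold v.
  replace (i + 1 - 1)%Z with i by lia.
  change (Series (fun m : nat => u (i - 1 - Z.of_nat m)%Z * v m)) with T0.
  change (Series (fun m : nat => u (i + 1 + Z.of_nat m)%Z * v m)) with U0.
  rewrite eSL0, eSLp, eSRm, eSR0.
  replace (u (i + Z.of_nat 0)%Z * dL v (Z.of_nat 0)) with (u i * (v 1%nat - 2 * v 0%nat))
    by (replace (i + Z.of_nat 0)%Z with i by lia; reflexivity).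
  replace (u (i + Z.of_nat 1)%Z * dL v (Z.of_nat 1)) with (u (i + 1)%Z * v 0%nat)
    by (replace (i + Z.of_nat 1)%Z with (i + 1)%Z by lia; reflexivity).
  replace (u (i + (- Z.of_nat 0 - 1))%Z * dL v (- (- Z.of_nat 0 - 1))%Z) with (u (i - 1)%Z * v 0%nat)
    by (replace (i + (- Z.of_nat 0 - 1))%Z with (i - 1)%Z by lia; reflexivity).
  replace (u (i + (- Z.of_nat 1 - 1))%Z * dL v (- (- Z.of_nat 1 - 1))%Z) with 0
    by (rewrite dL_ge2 by lia; ring).
  assert (Hpw : Rpower h (2 - alpha) = h ^ 2 * / Rpower h alpha).
  { replace (2 - alpha) with (INR 2 + - alpha) by (simpl; ring).
    rewrite Rpower_plus, Rpower_pow, Rpower_Ropp by lra. reflexivity. }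
  rewrite Hpw.
  assert (Hpa := Rpower_pos h alpha).
  field; repeat split; lra.
Qed.
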